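(* Let $\theta\in\Theta$ and $\lambda\in[0,1]$. For any $\theta'\in\Theta$ with $\|\theta-\theta'\|_2\le\frac{0.1\lambda}{G}$, any $0.4\lambda$-dominant set at $\theta$ is also a $0.2\lambda$-dominant set at $\theta'$.
   Context: $\Theta\subset\mathbb{R}^n$; $\ell:\Theta\times\mathcal Z\to[0,1]$ is $G$-Lipschitz in its first argument ($|\ell(\theta,z)-\ell(\theta',z)|\le G\|\theta-\theta'\|_2$); there are $K$ distributions $\mathcal P_i$ on $\mathcal Z$ and $R_i(\theta)=\mathbb E_{z\sim\mathcal P_i}\ell(\theta,z)$. For $\mu\ge0$, a nonempty $S\subseteq[K]$ is $\mu$-dominant at $\theta$ if $\min_{i\in S}R_i(\theta)\ge R_j(\theta)+\mu$ for all $j\in[K]\setminus S$. *)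

(* Defs.v *)
From HB Require Import structures.
From mathcomp Require Import all_boot all_order all_algebra.
From mathcomp Require Import all_classical all_reals all_analysis.
Set Implicit Arguments. Unset Strict Implicit. Unset Printing Implicit Defensive.
Import Order.TTheory GRing.Theory Num.Theory.
Local Open Scope ring_scope.

Definition norm2 (R : realType) (n : nat) (v : 'rV[R]_n) : R :=
  Num.sqrt (\sum_(i < n) v ord0 i ^+ 2).

Definition risk (R : realType) (d : measure_display) (Z : measurableType d)
  (P : probability Z R) (n : nat) (loss : 'rV[R]_n -> Z -> R) (th : 'rV[R]_n) : R :=
  \int[P]_z loss th z.

Definition dominant (R : realType) (K : nat) (Rk : 'I_K -> R) (S : {set 'I_K}) (mu : R) : Prop :=
  (exists i, i \in S) /\ forall i j, i \in S -> j \notin S -> Rk j + mu <= Rk i.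

(* Main.v *)
Require Import Defs.
From HB Require Import structures.
From mathcomp Require Import all_boot all_order all_algebra.
From mathcomp Require Import all_classical all_reals all_analysis.
From mathcomp Require Import measurable_realfun lebesgue_integral.
From mathcomp Require Import lra.
Import Order.TTheory GRing.Theory Num.Theory.
Local Open Scope ring_scope.

Lemma int_bdd (R : realType) (d : measure_display) (Z : measurableType d)
  (P : probability Z R) (f : Z -> R) :
  measurable_fun setT f -> (forall z, 0 <= f z <= 1) ->
  P.-integrable setT (EFin \o f).
Proof.
move=> mf hf.
apply: (@le_integrable _ _ _ _ _ _ _ (EFin \o cst 1)) => //.
- by apply/measurable_EFinP.
- move=> z _ /=; rewrite lee_fin normr1 ger0_norm; last by case/andP: (hf z).
  by case/andP: (hf z).
- exact: finite_measure_integrable_cst.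
Qed.

Lemma risk_le (R : realType) (d : measure_display) (Z : measurableType d)
  (P : probability Z R) (f g : Z -> R) (c : R) :
  measurable_fun setT f -> measurable_fun setT g ->
  (forall z, 0 <= f z <= 1) -> (forall z, 0 <= g z <= 1) ->
  (forall z, `|f z - g z| <= c) ->
  \int[P]_z f z <= \int[P]_z g z + c.
Proof.
move=> mf mg hf hg hc.
have -> : \int[P]_z g z + c = \int[P]_z (g z + c).
  rewrite RintegralD //; [|exact: int_bdd|exact: finite_measure_integrable_cst].
  rewrite Rintegral_cst //; set m := fine _.
  have -> : m = 1.
    rewrite /m; transitivity (fine (1%E : \bar R)) => //.
    by congr fine; exact: probability_setT.
  by rewrite mulr1.
apply: le_Rintegral => //.
- exact: int_bdd.
- have := integrableD measurableT (@int_bdd _ _ _ P g mg hg) (@finite_measure_integrable_cst _ _ _ P setT c measurableT).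
  by apply: eq_integrable => //.
- move=> z _; have := hc z; rewrite ler_norml => /andP[h1 h2].
  by rewrite -lerBlDl.
Qed.

Theorem lemmaB8 (R : realType) (n K : nat) (d : measure_display) (Z : measurableType d)
  (Theta : set 'rV[R]_n) (loss : 'rV[R]_n -> Z -> R) (G : R)
  (P : 'I_K -> probability Z R) (hG : 0 < G)
  (hmeas : forall th, Theta th -> measurable_fun setT (loss th))
  (hrange : forall th z, Theta th -> 0 <= loss th z <= 1)
  (hlip : forall th th' z, Theta th -> Theta th' ->
      `|loss th z - loss th' z| <= G * norm2 (th - th'))
  (th th' : 'rV[R]_n) (lam : R) (S : {set 'I_K}) :
  Theta th -> Theta th' -> 0 <= lam <= 1 ->
  norm2 (th - th') <= (1/10) * lam / G ->
  dominant (fun i => risk (P i) loss th) S ((4/10) * lam) ->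
  dominant (fun i => risk (P i) loss th') S ((2/10) * lam).
Proof.
move=> Tth Tth' hlam hD [hne hdom]; split => // i j iS jS.
have hc : G * norm2 (th - th') <= (1/10) * lam.
  by rewrite mulrC -ler_pdivlMr.
have hc' : forall z, `|loss th' z - loss th z| <= G * norm2 (th - th').
  by move=> z; rewrite distrC; apply: hlip.
have hc2 : forall z, `|loss th z - loss th' z| <= G * norm2 (th - th').
  by move=> z; apply: hlip.
have A := @risk_le _ _ _ (P j) _ _ _ (hmeas _ Tth') (hmeas _ Tth) (fun z => hrange _ z Tth')
  (fun z => hrange _ z Tth) hc'.
have B := @risk_le _ _ _ (P i) _ _ _ (hmeas _ Tth) (hmeas _ Tth') (fun z => hrange _ z Tth)
  (fun z => hrange _ z Tth') hc2.
have C := hdom i j iS jS.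
rewrite /risk in C *.
move: A B C hc.
set a := \int[P j]_z loss th' z; set b := \int[P j]_z loss th z.
set c := \int[P i]_z loss th z; set e := \int[P i]_z loss th' z.
set g := G * _.
move=> A B C hc.
clear -A B C hc.
lra.
Qed.
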